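(* Let $P_0$ and $R_0$ be non-isomorphic posets, each of size $m$, and let $i>m$. Then $D_{m+i+1}(P_iR_i)$ is a node of covtree consisting of $k=C(P_0R_0)+\lceil (i-m)/2\rceil$ posets of size $n=m+i+1$, and the smallest witness of this node has size $|P_iR_i|=2m+2i$. Consequently, for any constant $c$, $|P_iR_i|>n+k+c$ whenever $i-\lceil (i-m)/2\rceil>1+C(P_0R_0)-m+c$.
   Context: For $i\ge 0$, $P_i$ (resp. $R_i$) is obtained by placing $P_0$ (resp. $R_0$) above a chain of $i$ elements, and $P_iR_i$ is their disjoint union. A downset is a downward-closed subset; $D(P)$ is the set of non-empty downsets of $P$ up to isomorphism and $D_n(P)$ those of size $n$. $C(P_0R_0):=|D(P_0)|+|D(R_0)|-|D(P_0)\cap D(R_0)|$. A poset $Q$ is a witness of a set $\Gamma_n$ of unlabelled posets of size $n$ if $D_n(Q)=\Gamma_n$; a node of covtree is such a set $\Gamma_n$ that has at least one witness. *)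

(* Defs.v *)
From mathcomp Require Import all_boot all_order all_algebra.
Set Implicit Arguments. Unset Strict Implicit. Unset Printing Implicit Defensive.

Record fposet := FPoset { carrier :> finType; le : rel carrier }.

Definition is_poset (P : fposet) : Prop :=
  [/\ reflexive (@le P), antisymmetric (@le P) & transitive (@le P)].

Definition psize (P : fposet) : nat := #|carrier P|.

(* P placed above a chain of i elements: chain elements inr 0 < ... < inr (i-1)
   lie below every element of P. *)
Definition above_chain (P : fposet) (i : nat) : fposet :=
  @FPoset (carrier P + 'I_i)%type
    (fun x y => match x, y with
                | inl a, inl b => le a b
                | inr a, inr b => (a <= b)%N
                | inr _, inl _ => true
                | inl _, inr _ => false
                end).

Definition disj_union (P Q : fposet) : fposet :=
  @FPoset (carrier P + carrier Q)%type
    (fun x y => match x, y with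
                | inl a, inl b => le a b
                | inr a, inr b => le a b
                | _, _ => false
                end).

Definition is_downset (P : fposet) (S : {set P}) : bool :=
  [forall x in S, forall y : P, le y x ==> (y \in S)].

Definition downsets (P : fposet) : {set {set P}} :=
  [set S : {set P} | is_downset S && (0 < #|S|)%N].
Definition downsets_n (P : fposet) (n : nat) : {set {set P}} :=
  [set S : {set P} | is_downset S && (#|S| == n)].

Definition iso_sub (P Q : fposet) (S : {set P}) (S' : {set Q}) : bool :=
  [exists f : {ffun P -> Q},
    [&& [forall x in S, forall y in S, (f x == f y) ==> (x == y)],
        [set f x | x in S] == S' &
        [forall x in S, forall y in S, le x y == le (f x) (f y)]]].

Definition iso_poset (P Q : fposet) : bool := iso_sub [set: P] [set: Q].

Definition iso_class (P : fposet) (S : {set P}) : {set {set P}} :=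
  [set S' : {set P} | iso_sub S S'].

Definition numD (P : fposet) : nat :=
  #|[set iso_class S | S in downsets P]|.

Definition numDn (P : fposet) (n : nat) : nat :=
  #|[set iso_class S | S in downsets_n P n]|.

Definition numD_inter (P R : fposet) : nat :=
  #|[set iso_class S | S in [set S in downsets P |
        [exists S' in downsets R, iso_sub S S']]]|.

Definition Cconst (P R : fposet) : nat := numD P + numD R - numD_inter P R.

Definition same_Dn (n : nat) (P Q : fposet) : Prop :=
  (forall S, S \in downsets_n P n -> exists2 S', S' \in downsets_n Q n & iso_sub S S') /\
  (forall S', S' \in downsets_n Q n -> exists2 S, S \in downsets_n P n & iso_sub S' S).

Definition witness (n : nat) (P Q : fposet) : Prop := is_poset Q /\ same_Dn n Q P.

Definition covtree_node (n : nat) (P : fposet) : Prop := exists Q : fposet, witness n P Q.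

Definition ceil_half (a : nat) : nat := (a.+1)./2.

(* Main.v *)
Require Import Defs.
From mathcomp Require Import all_boot all_order all_algebra.
From mathcomp Require Import zify.
Set Implicit Arguments. Unset Strict Implicit. Unset Printing Implicit Defensive.

Lemma iso_subP (P Q : fposet) (S : {set P}) (S' : {set Q}) :
  reflect (exists f : P -> Q, [/\ {in S &, injective f}, f @: S = S' &
             {in S &, forall x y, le x y = le (f x) (f y)}]) (iso_sub S S').
Proof.
apply: (iffP existsP) => [[f /and3P[/forall_inP Hi /eqP Him /forall_inP Hl]]|[f [Hi Him Hl]]].
- exists f; split.
  + move=> x y xS yS fxy. have /forall_inP/(_ y yS) := Hi x xS. by rewrite fxy eqxx => /eqP.
  + done.
  + move=> x y xS yS. by have /forall_inP/(_ y yS)/eqP := Hl x xS.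
- exists (finfun f); apply/and3P; split.
  + apply/forall_inP => x xS; apply/forall_inP => y yS; rewrite !ffunE; apply/implyP => /eqP; move/Hi => -> //.
  + apply/eqP; rewrite -Him; apply: eq_imset => x; by rewrite ffunE.
  + apply/forall_inP => x xS; apply/forall_inP => y yS; rewrite !ffunE; apply/eqP; exact: Hl.
Qed.

Lemma iso_intro (P Q : fposet) (S : {set P}) (S' : {set Q}) (f : P -> Q) :
  is_poset P -> f @: S = S' -> {in S &, forall x y, le x y = le (f x) (f y)} -> iso_sub S S'.
Proof.
case=> Hr Ha _ Him Hl; apply/iso_subP; exists f; split => // x y xS yS fxy.
by apply: Ha; rewrite Hl // fxy -Hl // Hr /= Hl // fxy -Hl // Hr.
Qed.

Lemma iso_refl (P : fposet) (S : {set P}) : iso_sub S S.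
Proof. apply/iso_subP; exists id; split; [by move=> ?? | exact: imset_id | by []]. Qed.

Lemma iso_sym (P Q : fposet) (S : {set P}) (S' : {set Q}) (x0 : P) :
  iso_sub S S' -> iso_sub S' S.
Proof.
move/iso_subP=> [f [Hi Him Hl]].
pose g y := if [pick x in S | f x == y] is Some x then x else x0.
have gK : {in S, forall x, g (f x) = x}.
  move=> x xS; rewrite /g; case: pickP => [x' /andP[x'S /eqP e]|/(_ x)]; first exact: Hi.
  by rewrite xS eqxx.
apply/iso_subP; exists g; split.
- move=> y1 y2; rewrite -Him => /imsetP[x1 x1S ->] /imsetP[x2 x2S ->]; rewrite !gK // => ->. done.
- rewrite -Him -imset_comp (eq_in_imset (g:=id)); first exact: imset_id.
  by move=> x xS /=; rewrite gK.
- move=> y1 y2; rewrite -Him => /imsetP[x1 x1S ->] /imsetP[x2 x2S ->]; rewrite !gK //.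
  by rewrite Hl.
Qed.

Lemma iso_trans (P Q W : fposet) (S : {set P}) (S' : {set Q}) (S'' : {set W}) :
  iso_sub S S' -> iso_sub S' S'' -> iso_sub S S''.
Proof.
move/iso_subP=> [f [Hi Him Hl]] /iso_subP [g [Gi Gim Gl]].
have fS : forall x, x \in S -> f x \in S' by move=> x xS; rewrite -Him imset_f.
apply/iso_subP; exists (g \o f); split.
- move=> x y xS yS /= /Gi e; apply: Hi => //; apply: e; exact: fS.
- by rewrite imset_comp Him.
- by move=> x y xS yS /=; rewrite Hl // Gl // fS.
Qed.

Lemma iso_class_eq (P : fposet) (x0 : P) (S T : {set P}) :
  (iso_class S == iso_class T) = iso_sub S T.
Proof.
apply/eqP/idP => [e|h].
- have : T \in iso_class T by rewrite inE iso_refl.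
  by rewrite -e inE.
- apply/setP => U; rewrite !inE; apply/idP/idP => h2.
  + exact: iso_trans (iso_sym x0 h) h2.
  + exact: iso_trans h h2.
Qed.

Lemma card_imset_le (T U V : finType) (A : {set T}) (F : T -> U) (G : T -> V) :
  {in A &, forall x y, (F x == F y) = (G x == G y)} -> #|G @: A| <= #|F @: A|.
Proof.
move=> H.
case: (set_0Vmem A) => [->|[x0 x0A]]; first by rewrite !imset0 !cards0.
pose h c := if [pick x in A | F x == c] is Some x then G x else G x0.
apply: (leq_trans _ (leq_imset_card h _)); apply: subset_leq_card.
apply/subsetP => _ /imsetP[x xA ->]; apply/imsetP; exists (F x); first exact: imset_f.
rewrite /h; case: pickP => [x' /andP[x'A e]|/(_ x)]; last by rewrite xA eqxx.
by apply/esym/eqP; rewrite -H.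
Qed.

Lemma card_imset_equiv (T U V : finType) (A : {set T}) (F : T -> U) (G : T -> V) :
  {in A &, forall x y, (F x == F y) = (G x == G y)} -> #|F @: A| = #|G @: A|.
Proof.
move=> H; apply/eqP; rewrite eqn_leq !card_imset_le //.
by move=> x y xA yA; rewrite H.
Qed.

Lemma card_classes (P Q : fposet) (x0 : P) (y0 : Q) (A : {set {set P}})
  (F : {set P} -> {set Q}) :
  {in A &, forall D D', iso_sub (F D) (F D') = iso_sub D D'} ->
  #|[set iso_class (F D) | D in A]| = #|[set iso_class D | D in A]|.
Proof.
move=> H; apply: card_imset_equiv => D D' DA D'A.
by rewrite (iso_class_eq y0) (iso_class_eq x0) H.
Qed.

Lemma above_chain_poset (P : fposet) i : is_poset P -> is_poset (above_chain P i).
Proof.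
case=> Hr Ha Ht; split.
- by case=> [a|a] /=; [apply: Hr | apply: leqnn].
- case=> [a|a] [b|b] //= h; first by rewrite (Ha a b h).
  by congr inr; apply: val_inj; apply: anti_leq.
- case=> [b|b] [a|a] [c|c] //=; by [apply: Ht | apply: leq_trans].
Qed.

Lemma disj_union_poset (P Q : fposet) : is_poset P -> is_poset Q -> is_poset (disj_union P Q).
Proof.
case=> Hr Ha Ht [Hr' Ha' Ht']; split.
- by case=> [a|a] /=; [apply: Hr | apply: Hr'].
- case=> [a|a] [b|b] //= h; [by rewrite (Ha a b h) | by rewrite (Ha' a b h)].
- case=> [b|b] [a|a] [c|c] //=; by [apply: Ht | apply: Ht'].
Qed.

Lemma card_sum_set (A B : finType) (S : {set (A + B)%type}) :
  #|S| = #|[set a | inl a \in S]| + #|[set b | inr b \in S]|.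
Proof.
set SL := [set a | inl a \in S]; set SR := [set b | inr b \in S].
have -> : S = inl @: SL :|: inr @: SR.
  apply/setP => -[a|b]; rewrite inE.
  - rewrite (mem_imset _ _ (@inl_inj _ _)) inE.
    by case: imsetP => [[y _ //]|]; rewrite orbF.
  - rewrite (mem_imset _ _ (@inr_inj _ _)) inE.
    by case: imsetP => [[y _ //]|].
rewrite cardsU (_ : _ :&: _ = set0) ?cards0 ?subn0.
  by rewrite !card_imset // => ?? [] .
apply/setP => x; rewrite !inE.
by apply/andP => -[/imsetP[a _ ->] /imsetP[b _]].
Qed.

Lemma card_ord_lt i k (A : {set 'I_i}) : {in A, forall a : 'I_i, a < k} -> #|A| <= k.
Proof.
move=> H; rewrite cardE -(size_map val) -(size_iota 0 k).
apply: uniq_leq_size; first by rewrite map_inj_uniq ?enum_uniq //; apply: val_inj.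
by move=> x /mapP[a]; rewrite mem_enum => aA ->; rewrite mem_iota /= H.
Qed.

Lemma card_pref i k : k <= i -> #|[set j : 'I_i | j < k]| = k.
Proof.
move=> ki; have wi : injective (widen_ord ki) by move=> x y e; apply: val_inj; exact: (congr1 val e).
apply/eqP; rewrite eqn_leq card_ord_lt; last by move=> a; rewrite inE.
rewrite -[X in X <= _](card_ord k) -(card_imset _ wi).
by apply: subset_leq_card; apply/subsetP => _ /imsetP[j _ ->]; rewrite inE /=.
Qed.

Lemma prefix_mem i (A : {set 'I_i}) :
  (forall a b : 'I_i, a \in A -> b <= a -> b \in A) ->
  forall a : 'I_i, (a \in A) = (a < #|A|).
Proof.
move=> H a; apply/idP/idP => [aA|].
- have -> : (a : nat) = #|[set j : 'I_i | j < a]| by rewrite card_pref // ltnW.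
  apply: proper_card; rewrite properE; apply/andP; split.
    by apply/subsetP => j; rewrite inE => ja; apply: H aA _; rewrite ltnW.
  by apply/subsetP => /(_ a aA); rewrite inE ltnn.
- apply: contraLR; rewrite -!leqNgt => aA; apply: card_ord_lt => b bA.
  rewrite ltnNge; apply: contra aA => ab; exact: H bA ab.
Qed.

Lemma downsetP (P : fposet) (S : {set P}) :
  reflect (forall x y, x \in S -> le y x -> y \in S) (is_downset S).
Proof.
apply: (iffP forall_inP) => [H x y xS yx|H x xS].
- by have /forallP/(_ y)/implyP := H x xS; apply.
- by apply/forallP => y; apply/implyP; apply: H.
Qed.

Definition below (P : fposet) (S : {set P}) (x : P) := [set y in S | le y x && (y != x)].

Lemma iso_below (P Q : fposet) (S : {set P}) (S' : {set Q}) (f : P -> Q) :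
  {in S &, injective f} -> f @: S = S' -> {in S &, forall x y, le x y = le (f x) (f y)} ->
  forall x, x \in S -> #|below S' (f x)| = #|below S x|.
Proof.
move=> Hi Him Hl x xS.
have -> : below S' (f x) = f @: below S x.
  apply/setP => y; rewrite inE; apply/andP/imsetP => [[yS /andP[le1 ne1]]|[z]].
  - move: yS; rewrite -Him => /imsetP[z zS e]; exists z => //.
    rewrite inE zS Hl // -e le1 /=; by apply: contra ne1 => /eqP zx; rewrite e zx.
  - rewrite inE => /and3P[zS lz nz] ->; split; first by rewrite -Him imset_f.
    rewrite -Hl // lz /=; apply: contra nz => /eqP e; apply/eqP; exact: Hi.
apply: card_in_imset => y z; rewrite !inE => /andP[yS _] /andP[zS _]; exact: Hi.
Qed.

Lemma iso_restrict (P Q : fposet) (S A : {set P}) (B : {set Q}) (f : P -> Q) :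
  {in S &, injective f} -> {in S &, forall x y, le x y = le (f x) (f y)} ->
  A \subset S -> f @: A = B -> iso_sub A B.
Proof.
move=> Hi Hl /subsetP AS Him; apply/iso_subP; exists f; split => //.
- by move=> x y /AS xS /AS yS; apply: Hi.
- by move=> x y /AS xS /AS yS; apply: Hl.
Qed.

Lemma iso_embed (P Q W : fposet) (e1 : P -> W) (e2 : Q -> W) (d2 : W -> Q)
  (D : {set P}) (E : {set Q}) :
  is_poset P -> (forall x y, le (e1 x) (e1 y) = le x y) ->
  (forall x y, le (e2 x) (e2 y) = le x y) -> cancel e2 d2 ->
  iso_sub (e1 @: D) (e2 @: E) -> iso_sub D E.
Proof.
move=> HP L1 L2 K2 /iso_subP [f [Hi Him Hl]].
have e2inj : injective e2 by apply: can_inj K2.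
have F p : p \in D -> f (e1 p) = e2 (d2 (f (e1 p))) /\ d2 (f (e1 p)) \in E.
  move=> pD; have : f (e1 p) \in e2 @: E by rewrite -Him imset_f // imset_f.
  by case/imsetP => r rE ->; rewrite K2.
apply: (iso_intro (f := fun p => d2 (f (e1 p)))) => //.
- apply/setP => r; apply/imsetP/idP => [[p pD ->]|rE]; first by case: (F p pD).
  have : e2 r \in f @: (e1 @: D) by rewrite Him imset_f.
  case/imsetP => _ /imsetP[p pD ->] e; exists p => //; by rewrite -e K2.
- move=> p q pD qD; rewrite -L1 Hl ?imset_f //.
  case: (F p pD) => Ep _; case: (F q qD) => Eq _; rewrite Ep Eq L2 //. by rewrite !K2.
Qed.

Section PR.
Variables (P0 R0 : fposet) (i : nat).
Local Notation PR := (disj_union (above_chain P0 i) (above_chain R0 i)).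

Definition pcore (x : PR) : bool :=
  match x with inl (inl _) | inr (inl _) => true | _ => false end.

Definition core (S : {set PR}) := [set x in S | pcore x].

Lemma below_chain_small (S : {set PR}) (x : PR) (k : 'I_i) :
  (x = inl (inr k) \/ x = inr (inr k)) -> #|below S x| < i.
Proof.
move=> hx; apply: leq_trans (ltn_ord k).
have H (g : 'I_i -> PR) : below S x \subset g @: [set j : 'I_i | j < k] -> #|below S x| <= k.
  move=> sub; apply: leq_trans (subset_leq_card sub) _; apply: leq_trans (leq_imset_card _ _) _.
  by rewrite card_pref // ltnW.
case: hx => hx; [apply: (H (fun j => inl (inr j))) | apply: (H (fun j => inr (inr j)))];
  apply/subsetP => y; rewrite inE hx => /and3P[_];
  case: y => [[p|j]|[r|j]] //= jk ne; apply/imsetP; exists j => //;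
  rewrite inE ltn_neqAle jk andbT; by apply: contra ne => /eqP/val_inj ->.
Qed.

Lemma below_core (S : {set PR}) : is_downset S ->
  forall x, x \in S -> pcore x = (i <= #|below S x|).
Proof.
move/downsetP=> HS x xS.
case E : x => [[p|k]|[r|k]] /=.
- pose g (k : 'I_i) : PR := inl (inr k).
  have sub : g @: setT \subset below S x.
    apply/subsetP => _ /imsetP[k _ ->]; rewrite inE E /=; apply/andP; split => //.
    by apply: HS xS _; rewrite E.
  apply/esym; rewrite -E; apply: leq_trans _ (subset_leq_card sub); rewrite card_imset ?cardsT ?card_ord //.
  by move=> a b [].
- by apply/esym/negbTE; rewrite -ltnNge; apply: (@below_chain_small _ _ k); left.
- pose g (k : 'I_i) : PR := inr (inr k).
  have sub : g @: setT \subset below S x.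
    apply/subsetP => _ /imsetP[k _ ->]; rewrite inE E /=; apply/andP; split => //.
    by apply: HS xS _; rewrite E.
  apply/esym; rewrite -E; apply: leq_trans _ (subset_leq_card sub); rewrite card_imset ?cardsT ?card_ord //.
  by move=> a b [].
- by apply/esym/negbTE; rewrite -ltnNge; apply: (@below_chain_small _ _ k); right.
Qed.

Lemma iso_core_img (S S' : {set PR}) (f : PR -> PR) :
  is_downset S -> is_downset S' ->
  {in S &, injective f} -> f @: S = S' -> {in S &, forall x y, le x y = le (f x) (f y)} ->
  f @: core S = core S'.
Proof.
move=> DS DS' Hi Him Hl.
have fS x : x \in S -> f x \in S' by move=> xS; rewrite -Him imset_f.
have pc x : x \in S -> pcore (f x) = pcore x.
  by move=> xS; rewrite (below_core DS xS) (below_core DS' (fS x xS)) (iso_below Hi Him Hl).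
apply/setP => y; apply/imsetP/idP => [[x]|].
- by rewrite !inE => /andP[xS px] ->; rewrite fS //= pc.
- rewrite inE => /andP[]; rewrite -Him => /imsetP[x xS ->] px.
  by exists x => //; rewrite inE xS -pc.
Qed.

Lemma iso_core (S S' : {set PR}) : is_downset S -> is_downset S' ->
  iso_sub S S' -> iso_sub (core S) (core S').
Proof.
move=> DS DS' /iso_subP[f [Hi Him Hl]].
apply: (iso_restrict Hi Hl _ (iso_core_img DS DS' Hi Him Hl)).
by apply/subsetP => x; rewrite inE => /andP[].
Qed.

End PR.

Section PR2.
Variables (P0 R0 : fposet) (i : nat).
Local Notation PR := (disj_union (above_chain P0 i) (above_chain R0 i)).
Local Notation m := #|P0|.
Local Notation n := (m + i + 1).

Lemma card4 (S : {set PR}) :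
  #|S| = #|[set p | (inl (inl p) : PR) \in S]| + #|[set k | (inl (inr k) : PR) \in S]|
       + #|[set r | (inr (inl r) : PR) \in S]| + #|[set k | (inr (inr k) : PR) \in S]|.
Proof.
rewrite card_sum_set (card_sum_set [set a | inl a \in S]) (card_sum_set [set a | inr a \in S]).
rewrite addnA; congr (_ + _ + _ + _); apply: eq_card => z; by rewrite !inE.
Qed.

Definition TP (D : {set P0}) : {set PR} := [set x : PR |
  match x with inl (inl p) => p \in D | inl (inr _) => true
             | inr (inl _) => false | inr (inr k) => k < m.+1 - #|D| end].
Definition TR (E : {set R0}) : {set PR} := [set x : PR |
  match x with inl (inl _) => false | inl (inr k) => k < m.+1 - #|E|
             | inr (inl r) => r \in E | inr (inr _) => true end].
Definition U (a : nat) : {set PR} := [set x : PR |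
  match x with inl (inr k) => k < a | inr (inr k) => k < n - a | _ => false end].

Hypothesis HRm : #|R0| = m.
Hypothesis Hmi : m < i.

Lemma TP_down D : D \in downsets P0 -> TP D \in downsets_n PR n.
Proof.
rewrite !inE => /andP[/downsetP HD D0].
have Dm : #|D| <= m by apply: max_card.
apply/andP; split.
- apply/downsetP => -[[p|k]|[r|k]] [[q|j]|[s|j]]; rewrite !inE //=.
  + by move=> pD qp; apply: HD pD qp.
  + by move=> kb jk; apply: leq_ltn_trans jk kb.
- rewrite card4.
  have -> : #|[set p | (inl (inl p) : PR) \in TP D]| = #|D| by apply: eq_card => p; rewrite !inE.
  have -> : #|[set k | (inl (inr k) : PR) \in TP D]| = i.
    by rewrite -[RHS](card_ord i); apply: eq_card => k; rewrite !inE.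
  have -> : #|[set r | (inr (inl r) : PR) \in TP D]| = 0.
    by apply: eq_card0 => r; rewrite !inE.
  have -> : #|[set k | (inr (inr k) : PR) \in TP D]| = m.+1 - #|D|.
    rewrite -(@card_pref i (m.+1 - #|D|)); last by lia.
    by apply: eq_card => k; rewrite !inE.
  apply/eqP; lia.
Qed.

Lemma TR_down E : E \in downsets R0 -> TR E \in downsets_n PR n.
Proof.
rewrite !inE => /andP[/downsetP HE E0].
have Em : #|E| <= m by rewrite -HRm; apply: max_card.
apply/andP; split.
- apply/downsetP => -[[p|k]|[r|k]] [[q|j]|[s|j]]; rewrite !inE //=.
  + by move=> kb jk; apply: leq_ltn_trans jk kb.
  + by move=> pE qp; apply: HE pE qp.
- rewrite card4.
  have -> : #|[set p | (inl (inl p) : PR) \in TR E]| = 0.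
    by apply: eq_card0 => r; rewrite !inE.
  have -> : #|[set k | (inl (inr k) : PR) \in TR E]| = m.+1 - #|E|.
    rewrite -(@card_pref i (m.+1 - #|E|)); last by lia.
    by apply: eq_card => k; rewrite !inE.
  have -> : #|[set r | (inr (inl r) : PR) \in TR E]| = #|E| by apply: eq_card => p; rewrite !inE.
  have -> : #|[set k | (inr (inr k) : PR) \in TR E]| = i.
    by rewrite -[RHS](card_ord i); apply: eq_card => k; rewrite !inE.
  apply/eqP; lia.
Qed.

Lemma U_down a : m < a <= i -> U a \in downsets_n PR n.
Proof.
move=> /andP[ma ai]; rewrite inE; apply/andP; split.
- apply/downsetP => -[[p|k]|[r|k]] [[q|j]|[s|j]]; rewrite !inE //=;
  by move=> kb jk; apply: leq_ltn_trans jk kb.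
- rewrite card4.
  have -> : #|[set p | (inl (inl p) : PR) \in U a]| = 0.
    by apply: eq_card0 => r; rewrite !inE.
  have -> : #|[set k | (inl (inr k) : PR) \in U a]| = a.
    apply: etrans (@card_pref i a ai); apply: eq_card => k.
    by rewrite !inE.
  have -> : #|[set r | (inr (inl r) : PR) \in U a]| = 0.
    by apply: eq_card0 => r; rewrite !inE.
  have -> : #|[set k | (inr (inr k) : PR) \in U a]| = n - a.
    rewrite -(@card_pref i (n - a)); last by lia.
    by apply: eq_card => k; rewrite !inE.
  apply/eqP; lia.
Qed.

Lemma classify S : S \in downsets_n PR n ->
  [\/ exists2 D, D \in downsets P0 & S = TP D,
      exists2 E, E \in downsets R0 & S = TR E |
      exists2 a, m < a <= i & S = U a].
Proof.
rewrite inE => /andP[/downsetP HS /eqP cS].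
have c4 := card4 S; rewrite cS in c4.
set DL := [set p | (inl (inl p) : PR) \in S] in c4.
set CL := [set k | (inl (inr k) : PR) \in S] in c4.
set ER := [set r | (inr (inl r) : PR) \in S] in c4.
set CR := [set k | (inr (inr k) : PR) \in S] in c4.
have PL k : ((inl (inr k) : PR) \in S) = (k < #|CL|).
  rewrite -(prefix_mem (A := CL)) ?inE // => a b; rewrite !inE => aS ba.
  by apply: HS aS _.
have PRr k : ((inr (inr k) : PR) \in S) = (k < #|CR|).
  rewrite -(prefix_mem (A := CR)) ?inE // => a b; rewrite !inE => aS ba.
  by apply: HS aS _.
have DLm : #|DL| <= m by apply: max_card.
have ERm : #|ER| <= m by rewrite -HRm; apply: max_card.
have CLi : #|CL| <= i by rewrite -[X in _ <= X]card_ord; apply: max_card.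
have CRi : #|CR| <= i by rewrite -[X in _ <= X]card_ord; apply: max_card.
have fullL : DL != set0 -> #|CL| = i.
  case/set0Pn => p; rewrite inE => pS; apply/eqP; rewrite eqn_leq CLi /=.
  rewrite -[X in X <= _]card_ord; apply: subset_leq_card; apply/subsetP => k _.
  by rewrite inE; apply: HS pS _.
have fullR : ER != set0 -> #|CR| = i.
  case/set0Pn => p; rewrite inE => pS; apply/eqP; rewrite eqn_leq CRi /=.
  rewrite -[X in X <= _]card_ord; apply: subset_leq_card; apply/subsetP => k _.
  by rewrite inE; apply: HS pS _.
have dl : is_downset DL.
  by apply/downsetP => p q; rewrite !inE => pS qp; apply: HS pS _.
have er : is_downset ER.
  by apply/downsetP => p q; rewrite !inE => pS qp; apply: HS pS _.
case: (eqVneq DL set0) => [DL0|DLn]; case: (eqVneq ER set0) => [ER0|ERn].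
- have DL0' : #|DL| = 0 by rewrite DL0 cards0.
  have ER0' : #|ER| = 0 by rewrite ER0 cards0.
  apply: Or33; exists #|CL|; first by apply/andP; split; lia.
  apply/setP => -[[p|k]|[r|k]]; rewrite !inE /=.
  + apply/negbTE; apply/negP => pS; have : p \in DL by rewrite inE.
    by rewrite DL0 inE.
  + exact: PL.
  + apply/negbTE; apply/negP => pS; have : r \in ER by rewrite inE.
    by rewrite ER0 inE.
  + by rewrite PRr; have -> : #|CR| = #|P0| + i + 1 - #|CL| by lia.
- have DL0' : #|DL| = 0 by rewrite DL0 cards0.
  have := fullR ERn; move=> cR.
  apply: Or32; exists ER.
    by rewrite inE er /= card_gt0.
  apply/setP => -[[p|k]|[r|k]]; rewrite !inE /=.
  + apply/negbTE; apply/negP => pS; have : p \in DL by rewrite inE.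
    by rewrite DL0 inE.
  + by rewrite PL; have -> : #|CL| = #|P0|.+1 - #|ER| by lia.
  + by [].
  + by rewrite PRr cR ltn_ord.
- have ER0' : #|ER| = 0 by rewrite ER0 cards0.
  have := fullL DLn; move=> cL.
  apply: Or31; exists DL.
    by rewrite inE dl /= card_gt0.
  apply/setP => -[[p|k]|[r|k]]; rewrite !inE /=.
  + by [].
  + by rewrite PL cL ltn_ord.
  + apply/negbTE; apply/negP => pS; have : r \in ER by rewrite inE.
    by rewrite ER0 inE.
  + by rewrite PRr; have -> : #|CR| = #|P0|.+1 - #|DL| by lia.
- have := fullL DLn; have := fullR ERn => cR cL.
  have : 0 < #|DL| by rewrite card_gt0.
  have : 0 < #|ER| by rewrite card_gt0.
  lia.
Qed.

End PR2.

Lemma iso_intro2 (P Q : fposet) (S : {set P}) (S' : {set Q}) (f : P -> Q) :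
  is_poset P -> {in S, forall x, f x \in S'} -> #|S'| <= #|S| ->
  {in S &, forall x y, le x y = le (f x) (f y)} -> iso_sub S S'.
Proof.
move=> HP fS cS Hl; apply: (iso_intro (f := f) HP) => //.
have inj : {in S &, injective f}.
  move: HP => [Hr Ha _] x y xS yS fxy; apply: Ha.
  by rewrite Hl // fxy -Hl // Hr /= Hl // fxy -Hl // Hr.
apply/eqP; rewrite eqEcard; apply/andP; split.
  by apply/subsetP => _ /imsetP[x xS ->]; apply: fS.
by rewrite card_in_imset.
Qed.

Lemma dn_card (P : fposet) n (S : {set P}) : S \in downsets_n P n -> #|S| = n.
Proof. by rewrite inE => /andP[_ /eqP]. Qed.
Lemma dn_down (P : fposet) n (S : {set P}) : S \in downsets_n P n -> is_downset S.
Proof. by rewrite inE => /andP[]. Qed.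

Section PR3.
Variables (P0 R0 : fposet) (i : nat).
Local Notation PR := (disj_union (above_chain P0 i) (above_chain R0 i)).
Local Notation m := #|P0|.
Local Notation n := (m + i + 1).
Hypothesis HP : is_poset P0.
Hypothesis HR : is_poset R0.
Hypothesis HRm : #|R0| = m.
Hypothesis Hmi : m < i.
Variables (p0 : P0) (r0 : R0).
Local Notation TPs := (@TP P0 R0 i).
Local Notation TRs := (@TR P0 R0 i).
Local Notation Us := (@U P0 R0 i).

Lemma PR_poset : is_poset PR.
Proof. by apply: disj_union_poset; apply: above_chain_poset. Qed.

Lemma coreTP D : core (TPs D) = (fun p => (inl (inl p) : PR)) @: D.
Proof.
apply/setP => -[[p|k]|[r|k]]; rewrite !inE /=.
- by rewrite andbT (mem_imset _ _ (_ : injective (fun p => (inl (inl p) : PR)))) // => ?? [].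
- by apply/esym/imsetP => -[q _].
- by apply/esym/imsetP => -[q _].
- by rewrite andbF; apply/esym/imsetP => -[q _].
Qed.

Lemma coreTR E : core (TRs E) = (fun p => (inr (inl p) : PR)) @: E.
Proof.
apply/setP => -[[p|k]|[r|k]]; rewrite !inE /=.
- by apply/esym/imsetP => -[q _].
- by rewrite andbF; apply/esym/imsetP => -[q _].
- by rewrite andbT (mem_imset _ _ (_ : injective (fun p => (inr (inl p) : PR)))) // => ?? [].
- by apply/esym/imsetP => -[q _].
Qed.

Lemma coreU a : core (Us a) = set0.
Proof. by apply/setP => -[[p|k]|[r|k]]; rewrite !inE /= ?andbF. Qed.

Lemma isoLL D D' : D \in downsets P0 -> D' \in downsets P0 ->
  iso_sub (TPs D) (TPs D') = iso_sub D D'.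
Proof.
move=> hD hD'; have tD := TP_down HRm Hmi hD; have tD' := TP_down HRm Hmi hD'.
apply/idP/idP => h.
- have := iso_core (dn_down tD) (dn_down tD') h; rewrite !coreTP.
  apply: (iso_embed (d2 := fun x : PR => if x is inl (inl p) then p else p0)) => //.
- case/iso_subP: h => g [gi gim gl].
  have cD : #|D'| = #|D| by rewrite -gim card_in_imset.
  apply: (@iso_intro2 PR PR _ _ (fun x : PR => match x with inl (inl p) => inl (inl (g p)) | y => y end)).
  + exact: PR_poset.
  + move=> -[[p|k]|[r|k]]; rewrite !inE //=; first by move=> pD; rewrite -gim imset_f.
    by rewrite cD.
  + by rewrite (dn_card tD) (dn_card tD').
  + move=> -[[p|k]|[r|k]] -[[q|j]|[s|j]]; rewrite !inE //= => ? ?; exact: gl.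
Qed.

Lemma isoRR E E' : E \in downsets R0 -> E' \in downsets R0 ->
  iso_sub (TRs E) (TRs E') = iso_sub E E'.
Proof.
move=> hE hE'; have tE := TR_down HRm Hmi hE; have tE' := TR_down HRm Hmi hE'.
apply/idP/idP => h.
- have := iso_core (dn_down tE) (dn_down tE') h; rewrite !coreTR.
  apply: (iso_embed (d2 := fun x : PR => if x is inr (inl p) then p else r0)) => //.
- case/iso_subP: h => g [gi gim gl].
  have cE : #|E'| = #|E| by rewrite -gim card_in_imset.
  apply: (@iso_intro2 PR PR _ _ (fun x : PR => match x with inr (inl p) => inr (inl (g p)) | y => y end)).
  + exact: PR_poset.
  + move=> -[[p|k]|[r|k]]; rewrite !inE //=; last by move=> pD; rewrite -gim imset_f.
    by rewrite cE.
  + by rewrite (dn_card tE) (dn_card tE').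
  + move=> -[[p|k]|[r|k]] -[[q|j]|[s|j]]; rewrite !inE //= => ? ?; exact: gl.
Qed.

Lemma isoLR D E : D \in downsets P0 -> E \in downsets R0 ->
  iso_sub (TPs D) (TRs E) = iso_sub D E.
Proof.
move=> hD hE; have tD := TP_down HRm Hmi hD; have tE := TR_down HRm Hmi hE.
apply/idP/idP => h.
- have := iso_core (dn_down tD) (dn_down tE) h; rewrite coreTP coreTR.
  apply: (iso_embed (d2 := fun x : PR => if x is inr (inl p) then p else r0)) => //.
- case/iso_subP: h => g [gi gim gl].
  have cE : #|E| = #|D| by rewrite -gim card_in_imset.
  apply: (@iso_intro2 PR PR _ _ (fun x : PR => match x with
     | inl (inl p) => inr (inl (g p)) | inl (inr k) => inr (inr k)
     | inr (inr k) => inl (inr k) | y => y end)).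
  + exact: PR_poset.
  + move=> -[[p|k]|[r|k]]; rewrite !inE //=; first by move=> pD; rewrite -gim imset_f.
    by rewrite cE.
  + by rewrite (dn_card tD) (dn_card tE).
  + move=> -[[p|k]|[r|k]] -[[q|j]|[s|j]]; rewrite !inE //= => ? ?; exact: gl.
Qed.

End PR3.

Definition hmax (P : fposet) (S : {set P}) := \max_(x in S) #|below S x|.

Lemma iso_hmax (P Q : fposet) (S : {set P}) (S' : {set Q}) : iso_sub S S' -> hmax S = hmax S'.
Proof.
case/iso_subP => f [Hi Him Hl]; rewrite /hmax -Him big_imset //=.
by apply: eq_bigr => x xS; rewrite Him (iso_below Hi Him Hl).
Qed.

Lemma iso_set0 (P Q : fposet) (A : {set P}) : iso_sub A (set0 : {set Q}) -> A = set0.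
Proof. by case/iso_subP => f [_ /eqP]; rewrite imset_eq0 => /eqP. Qed.

Section PR4.
Variables (P0 R0 : fposet) (i : nat).
Local Notation PR := (disj_union (above_chain P0 i) (above_chain R0 i)).
Local Notation m := #|P0|.
Local Notation n := (m + i + 1).
Hypothesis HP : is_poset P0.
Hypothesis HR : is_poset R0.
Hypothesis HRm : #|R0| = m.
Hypothesis Hmi : m < i.
Local Notation TPs := (@TP P0 R0 i).
Local Notation TRs := (@TR P0 R0 i).
Local Notation Us := (@U P0 R0 i).

Lemma below_chain_eq (S : {set PR}) (k : 'I_i) (b : bool) :
  is_downset S -> (if b then inl (inr k) else inr (inr k) : PR) \in S ->
  #|below S (if b then inl (inr k) else inr (inr k))| = k.
Proof.
move=> /downsetP HS; case: b => /= xS.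
- pose g (j : 'I_i) : PR := inl (inr j).
  have -> : below S (inl (inr k)) = g @: [set j : 'I_i | j < k].
    apply/setP => y; rewrite inE; apply/idP/imsetP.
    - case/and3P => _; rewrite /g;
      case: y => [[p|j]|[r|j]] //= jk ne; exists j => //;
      rewrite inE ltn_neqAle jk andbT; by apply: contra ne => /eqP/val_inj ->.
    - case=> j; rewrite inE /g => jk ->.
      have jS : (inl (inr j) : PR) \in S by apply: HS xS _; rewrite /= ltnW.
      rewrite jS /= ltnW //=; apply/eqP => -[e]; move: jk; by rewrite e ltnn.
  rewrite card_imset; first by rewrite card_pref // ltnW.
  by move=> x y; rewrite /g => -[].
- pose g (j : 'I_i) : PR := inr (inr j).
  have -> : below S (inr (inr k)) = g @: [set j : 'I_i | j < k].
    apply/setP => y; rewrite inE; apply/idP/imsetP.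
    - case/and3P => _; rewrite /g;
      case: y => [[p|j]|[r|j]] //= jk ne; exists j => //;
      rewrite inE ltn_neqAle jk andbT; by apply: contra ne => /eqP/val_inj ->.
    - case=> j; rewrite inE /g => jk ->.
      have jS : (inr (inr j) : PR) \in S by apply: HS xS _; rewrite /= ltnW.
      rewrite jS /= ltnW //=; apply/eqP => -[e]; move: jk; by rewrite e ltnn.
  rewrite card_imset; first by rewrite card_pref // ltnW.
  by move=> x y; rewrite /g => -[].
Qed.

Lemma hmax_U a : m < a <= i -> hmax (Us a) = (maxn a (n - a)).-1.
Proof.
move=> /andP[ma ai]; have dU := dn_down (U_down HRm Hmi (a := a) (introT andP (conj ma ai))).
apply/eqP; rewrite eqn_leq; apply/andP; split.
- apply/bigmax_leqP => -[[p|k]|[r|k]] xU; move: (xU); rewrite inE //=.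
  + move=> ka; have := @below_chain_eq (Us a) k true dU xU; rewrite /= => ->; lia.
  + move=> ka; have := @below_chain_eq (Us a) k false dU xU; rewrite /= => ->; lia.
- case: (leqP (n - a) a) => h.
  + have a1 : a.-1 < i by lia.
    have xU : (inl (inr (Ordinal a1)) : PR) \in Us a by rewrite inE /=; lia.
    apply: leq_trans (leq_bigmax_cond _ xU).
    have := @below_chain_eq (Us a) (Ordinal a1) true dU xU; rewrite /= => ->; lia.
  + have a1 : (n - a).-1 < i by lia.
    have xU : (inr (inr (Ordinal a1)) : PR) \in Us a by rewrite inE /=; lia.
    apply: leq_trans (leq_bigmax_cond _ xU).
    have := @below_chain_eq (Us a) (Ordinal a1) false dU xU; rewrite /= => ->; lia.
Qed.

Lemma isoUU a a' : m < a <= i -> m < a' <= i ->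
  iso_sub (Us a) (Us a') = (maxn a (n - a) == maxn a' (n - a')).
Proof.
move=> ha ha'; apply/idP/eqP => [h|h].
- have := iso_hmax h; rewrite !hmax_U //; lia.
- have [<-|e] : a' = a \/ a' = n - a by lia.
    exact: iso_refl.
  have dU := U_down HRm Hmi ha; have dU' := U_down HRm Hmi ha'.
  apply: (@iso_intro2 PR PR _ _ (fun x : PR => match x with
     | inl (inr k) => inr (inr k) | inr (inr k) => inl (inr k) | y => y end)).
  + exact: PR_poset.
  + have e2 : n - a' = a by lia.
    by move=> -[[p|k]|[r|k]]; rewrite !inE ?e2 -?e //=.
  + by rewrite (dn_card dU) (dn_card dU').
  + by move=> -[[p|k]|[r|k]] -[[q|j]|[s|j]]; rewrite !inE.
Qed.

Lemma notTU D a : D \in downsets P0 -> m < a <= i -> ~~ iso_sub (TPs D) (Us a).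
Proof.
move=> hD ha; apply/negP => h.
have := iso_core (dn_down (TP_down HRm Hmi hD)) (dn_down (U_down HRm Hmi ha)) h.
rewrite coreTP coreU => /iso_set0 /eqP; rewrite imset_eq0 => /eqP D0.
by move: hD; rewrite inE D0 cards0 andbF.
Qed.

Lemma notTRU E a : E \in downsets R0 -> m < a <= i -> ~~ iso_sub (TRs E) (Us a).
Proof.
move=> hE ha; apply/negP => h.
have := iso_core (dn_down (TR_down HRm Hmi hE)) (dn_down (U_down HRm Hmi ha)) h.
rewrite coreTR coreU => /iso_set0 /eqP; rewrite imset_eq0 => /eqP D0.
by move: hE; rewrite inE D0 cards0 andbF.
Qed.

End PR4.

Lemma extend_downset (Q : fposet) (k : nat) : is_poset Q ->
  forall A B : {set Q}, is_downset A -> is_downset B -> A \subset B ->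
  #|A| <= k <= #|B| -> exists2 Z : {set Q}, Z \in downsets_n Q k & A \subset Z /\ Z \subset B.
Proof.
case=> Hr Ha Ht A B; move: {2}(k - #|A|) (erefl (k - #|A|)) => d.
elim: d A => [|d IH] A dA dnA dnB AB /andP[Ak kB].
- exists A; last by split.
  by rewrite inE dnA /=; apply/eqP; lia.
- have : B :\: A != set0.
    apply/negP => /eqP e.
    have sub : B \subset A.
      apply/subsetP => x xB; apply/negPn/negP => xA.
      have : x \in B :\: A by rewrite inE xA xB.
      by rewrite e inE.
    have := subset_leq_card sub; lia.
  case/set0Pn => y0 y0in.
  case: (arg_minnP (fun y => #|[set u | le u y]|) y0in) => y yin ymin.
  have yin' : y \in B :\: A := yin; move: yin'; rewrite inE => /andP[yA yB].
  have dA' : is_downset (y |: A).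
    apply/downsetP => x z; rewrite !inE => /orP[/eqP ->|xA] zx.
    + case: (boolP (z \in A)) => [zA|zA]; first by apply/orP; right.
      have zB : z \in B by move/downsetP: dnB => H; apply: H yB zx.
      have zin : z \in B :\: A by rewrite inE zA zB.
      have h := ymin z zin.
      apply/orP; left; apply/eqP; apply: Ha; rewrite zx /=.
      apply/negPn/negP => yz.
      have : [set u | le u z] \proper [set u | le u y].
        rewrite properE; apply/andP; split.
          by apply/subsetP => u; rewrite !inE => uz; apply: Ht zx.
        by apply/subsetP => /(_ y); rewrite !inE Hr => /(_ isT); apply/negP.
      by move/proper_card; rewrite ltnNge h.
    + by apply/orP; right; move/downsetP: dnA; apply; first exact: xA.
  have e1 : k - #|y |: A| = d by rewrite cardsU1 yA; lia.
  have s1 : y |: A \subset B by rewrite subUset sub1set yB.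
  have c1 : #|y |: A| <= k <= #|B| by rewrite cardsU1 yA; apply/andP; split; lia.
  have [Z ZQ [yAZ ZB]] := IH (y |: A) e1 dA' dnB s1 c1.
  exists Z => //; split => //; apply: subset_trans yAZ; exact: subsetUr.
Qed.

Lemma min_transfer (P Q : fposet) (S' : {set P}) (S : {set Q}) (f : P -> Q) (b : P) :
  is_downset S -> f @: S' = S -> {in S' &, forall x y, le x y = le (f x) (f y)} ->
  b \in S' -> (forall z, le z b -> z = b) -> forall y, le y (f b) -> y = f b.
Proof.
move=> /downsetP dS Him Hl bS hb y yb.
have : y \in S by apply: dS yb; rewrite -Him imset_f.
rewrite -Him => /imsetP[z zS e]; subst y; congr f; apply: hb; by rewrite Hl.
Qed.

Lemma img_downset (P Q : fposet) (S' A : {set P}) (S : {set Q}) (f : P -> Q) :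
  is_downset S -> f @: S' = S -> {in S' &, forall x y, le x y = le (f x) (f y)} ->
  A \subset S' -> is_downset A -> is_downset (f @: A).
Proof.
move=> /downsetP dS Him Hl /subsetP AS /downsetP dA.
apply/downsetP => _ y /imsetP[x xA ->] yx.
have : y \in S by apply: dS yx; rewrite -Him imset_f // AS.
have xS := AS x xA.
rewrite -Him => /imsetP[z zS e]; subst y; apply: imset_f; apply: (dA x) => //.
by rewrite Hl.
Qed.

Section PR6.
Variables (P0 R0 : fposet) (i : nat).
Local Notation PR := (disj_union (above_chain P0 i) (above_chain R0 i)).
Local Notation m := #|P0|.
Local Notation n := (m + i + 1).
Hypothesis HP : is_poset P0.
Hypothesis HR : is_poset R0.
Hypothesis HRm : #|R0| = m.
Hypothesis Hmi : m < i.
Variables (p0 : P0) (r0 : R0).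
Hypothesis Hni : ~~ iso_poset P0 R0.
Local Notation TPs := (@TP P0 R0 i).
Local Notation TRs := (@TR P0 R0 i).
Local Notation Us := (@U P0 R0 i).

Let i0 : 0 < i := leq_ltn_trans (leq0n m) Hmi.
Let o0 : 'I_i := Ordinal i0.
Let botl : PR := inl (inr o0).
Let botr : PR := inr (inr o0).

Lemma o0_min (k : 'I_i) : k <= o0 -> k = o0.
Proof. by move=> h; apply: val_inj => /=; move: h; rewrite /= leqn0 => /eqP. Qed.

Lemma le_botl (y : PR) : le y botl -> y = botl.
Proof. by case: y => [[p|k]|[r|k]] //= /o0_min ->. Qed.
Lemma le_botr (y : PR) : le y botr -> y = botr.
Proof. by case: y => [[p|k]|[r|k]] //= /o0_min ->. Qed.
Lemma no_common (y : PR) : le y botl -> le y botr -> False.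
Proof. by move/le_botl ->. Qed.

Lemma bots_in S : S \in downsets_n PR n -> botl \in S /\ botr \in S.
Proof.
move=> hS; case: (classify HRm Hmi hS) => [[D hD ->]|[E hE ->]|[a ha ->]];
  rewrite !inE /=.
- have Dm : #|D| <= m by apply: max_card.
  move: Dm Hmi; rewrite /= => *; split => //; lia.
- have Em : #|E| <= m by rewrite -HRm; apply: max_card.
  move: Em Hmi; rewrite /= => *; split => //; lia.
- move: ha Hmi; rewrite /= => /andP[? ?] ?; split; lia.
Qed.

Lemma min_bots (S : {set PR}) (y : PR) : is_downset S -> y \in S ->
  (forall w, w \in S -> le w y -> w = y) -> y = botl \/ y = botr.
Proof.
move=> /downsetP dS yS hy; case: y yS hy => [[p|k]|[r|k]] yS hy.
- left; apply/esym/hy => //; by apply: dS yS _.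
- left; apply/esym/hy => //; by apply: dS yS _.
- right; apply/esym/hy => //; by apply: dS yS _.
- right; apply/esym/hy => //; by apply: dS yS _.
Qed.

Definition LL : {set PR} := [set x : PR | if x is inl _ then true else false].
Definition RRs : {set PR} := [set x : PR | if x is inr _ then true else false].

Lemma LL_down : is_downset LL.
Proof. by apply/downsetP => -[[p|k]|[r|k]] [[q|j]|[s|j]]; rewrite !inE. Qed.
Lemma RR_down : is_downset RRs.
Proof. by apply/downsetP => -[[p|k]|[r|k]] [[q|j]|[s|j]]; rewrite !inE. Qed.

Lemma card_LL : #|LL| = m + i.
Proof.
rewrite card4.
have -> : #|[set p | (inl (inl p) : PR) \in LL]| = m by apply: eq_card => p; rewrite !inE.
have -> : #|[set k | (inl (inr k) : PR) \in LL]| = i.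
  by rewrite -[RHS](card_ord i); apply: eq_card => k; rewrite !inE.
have -> : #|[set r | (inr (inl r) : PR) \in LL]| = 0 by apply: eq_card0 => r; rewrite !inE.
have -> : #|[set k | (inr (inr k) : PR) \in LL]| = 0 by apply: eq_card0 => r; rewrite !inE.
lia.
Qed.

Lemma card_RR : #|RRs| = m + i.
Proof.
rewrite card4.
have -> : #|[set p | (inl (inl p) : PR) \in RRs]| = 0 by apply: eq_card0 => r; rewrite !inE.
have -> : #|[set k | (inl (inr k) : PR) \in RRs]| = 0 by apply: eq_card0 => r; rewrite !inE.
have -> : #|[set r | (inr (inl r) : PR) \in RRs]| = m by rewrite -HRm; apply: eq_card => p; rewrite !inE.
have -> : #|[set k | (inr (inr k) : PR) \in RRs]| = i.
  by rewrite -[RHS](card_ord i); apply: eq_card => k; rewrite !inE.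
lia.
Qed.

Lemma coreLL : core LL = (fun p => (inl (inl p) : PR)) @: setT.
Proof.
apply/setP => -[[p|k]|[r|k]]; rewrite !inE /=.
- by rewrite (mem_imset _ _ (_ : injective (fun p => (inl (inl p) : PR)))) ?inE // => ?? [].
- by apply/esym/imsetP => -[q _].
- by apply/esym/imsetP => -[q _].
- by apply/esym/imsetP => -[q _].
Qed.

Lemma coreRR : core RRs = (fun p => (inr (inl p) : PR)) @: setT.
Proof.
apply/setP => -[[p|k]|[r|k]]; rewrite !inE /=.
- by apply/esym/imsetP => -[q _].
- by apply/esym/imsetP => -[q _].
- by rewrite (mem_imset _ _ (_ : injective (fun p => (inr (inl p) : PR)))) ?inE // => ?? [].
- by apply/esym/imsetP => -[q _].
Qed.


Lemma minimality (Q : fposet) : witness n PR Q -> #|PR| <= #|Q|.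
Proof.
case=> HQ [W1 W2].
have hT : [set: P0] \in downsets P0.
  rewrite inE; apply/andP; split; first by apply/downsetP.
  by rewrite card_gt0; apply/set0Pn; exists p0; rewrite inE.
have hR : [set: R0] \in downsets R0.
  rewrite inE; apply/andP; split; first by apply/downsetP.
  by rewrite card_gt0; apply/set0Pn; exists r0; rewrite inE.
have dS1' := TP_down HRm Hmi hT; have dS2' := TR_down HRm Hmi hR.
have [S1 S1n /iso_subP [f1 [i1 im1 l1]]] := W2 _ dS1'.
have [S2 S2n /iso_subP [f2 [i2 im2 l2]]] := W2 _ dS2'.
have dS1 := dn_down S1n; have dS2 := dn_down S2n.
have LLsub : LL \subset TPs setT by apply/subsetP => -[[p|k]|[r|k]]; rewrite !inE.
have RRsub : RRs \subset TRs setT by apply/subsetP => -[[p|k]|[r|k]]; rewrite !inE.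
set K := f1 @: LL; set L := f2 @: RRs.
have cK : #|K| = m + i.
  rewrite -card_LL card_in_imset // => x y /(subsetP LLsub) xS /(subsetP LLsub) yS; exact: i1.
have cL : #|L| = m + i.
  rewrite -card_RR card_in_imset // => x y /(subsetP RRsub) xS /(subsetP RRsub) yS; exact: i2.
have dK : is_downset K := img_downset dS1 im1 l1 LLsub LL_down.
have dL : is_downset L := img_downset dS2 im2 l2 RRsub RR_down.
have bl1 : botl \in TPs setT by rewrite inE.
have br1 : botr \in TPs setT by rewrite inE cardsT subSnn.
have bl2 : botl \in TRs setT by rewrite inE cardsT HRm subSnn.
have br2 : botr \in TRs setT by rewrite inE.
set a1 := f1 botl; set b1 := f1 botr; set a2 := f2 botr.
have ma1 : forall y, le y a1 -> y = a1 := min_transfer dS1 im1 l1 bl1 le_botl.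
have mb1 : forall y, le y b1 -> y = b1 := min_transfer dS1 im1 l1 br1 le_botr.
have ma2 : forall y, le y a2 -> y = a2 := min_transfer dS2 im2 l2 br2 le_botr.
have a1K : forall x, x \in K -> le a1 x.
  move=> _ /imsetP[z zL ->]; rewrite -l1 //; last exact: (subsetP LLsub).
  by move: zL; case: z => [[p|k]|[r|k]]; rewrite inE.
have a2L : forall x, x \in L -> le a2 x.
  move=> _ /imsetP[z zL ->]; rewrite -l2 //; last exact: (subsetP RRsub).
  by move: zL; case: z => [[p|k]|[r|k]]; rewrite inE.
have b1K : forall x, x \in K -> ~~ le b1 x.
  move=> _ /imsetP[z zL ->]; rewrite -l1 //; last exact: (subsetP LLsub).
  by move: zL; case: z => [[p|k]|[r|k]]; rewrite inE.
have a1inK : a1 \in K by apply: imset_f; rewrite inE.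
have a2inL : a2 \in L by apply: imset_f; rewrite inE.
have cQ : n <= #|Q| by rewrite -(dn_card S1n); apply: max_card.
have a1a2 : a1 != a2.
  apply/eqP => e.
  case: (eqVneq K L) => [KL|KnL].
  - have isoK : iso_sub LL K by apply: (iso_restrict i1 l1 LLsub).
    have isoL : iso_sub RRs L by apply: (iso_restrict i2 l2 RRsub).
    have isoLR : iso_sub LL RRs.
      by apply: iso_trans isoK _; rewrite KL; apply: (iso_sym botl).
    have := iso_core LL_down RR_down isoLR; rewrite coreLL coreRR.
    move/(iso_embed (d2 := fun x : PR => if x is inr (inl p) then p else r0)) => h.
    by move: Hni; rewrite /iso_poset h.
  - have LnK : ~~ (L \subset K).
      apply/negP => LK; move/negP: KnL; apply; apply/eqP/esym/eqP.
      by rewrite eqEcard LK cK cL leqnn.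
    have cKL : n <= #|K :|: L|.
      have pr : K \proper K :|: L := properUl LnK.
      have := proper_card pr; rewrite cK => h; by rewrite addn1.
    have dKL : is_downset (K :|: L).
      apply/downsetP => x y; rewrite inE => /orP[xK|xL] yx; rewrite inE.
      + by move/downsetP: dK => h; rewrite (h x y xK yx).
      + by move/downsetP: dL => h; rewrite (h x y xL yx) orbT.
    have Kn : #|K| <= n <= #|K :|: L| by rewrite cK cKL andbT leq_addr.
    have [Z Zn [KZ ZKL]] := extend_downset HQ dK dKL (subsetUl K L) Kn.
    have [Z' Z'n /iso_subP [g [gi gim gl]]] := W1 _ Zn.
    have [blZ brZ] := bots_in Z'n.
    have geq : forall z, z \in Z -> le a1 z.
      move=> z /(subsetP ZKL); rewrite inE => /orP[zK|zL]; first exact: a1K.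
      rewrite e; exact: a2L.
    have a1Z : a1 \in Z by apply: (subsetP KZ).
    have lb : forall w, w \in Z' -> le (g a1) w.
      move=> w; rewrite -gim => /imsetP[z zZ ->]; rewrite -gl //; exact: geq.
    exact: (no_common (lb _ blZ) (lb _ brZ)).
have m1 : 0 < m by apply/card_gt0P; exists p0.
have n3 : 3 <= n by clear -m1 Hmi; lia.
have a2b1 : a2 = b1.
  apply/eqP; apply/negPn/negP => a2b1.
  have a1b1 : a1 != b1.
    by apply/negP => /eqP /i1 => /(_ bl1 br1).
  set T := [set a1; b1; a2].
  have dT : is_downset T.
    apply/downsetP => x y; rewrite !inE => /orP[/orP[/eqP->|/eqP->]|/eqP->] h.
    - by rewrite (ma1 _ h) eqxx.
    - by rewrite (mb1 _ h) eqxx !orbT.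
    - by rewrite (ma2 _ h) eqxx !orbT.
  have cT : #|T| <= n <= #|[set: Q]|.
    rewrite cardsT cQ andbT; apply: leq_trans n3.
    apply: leq_trans (card_size [:: a1; b1; a2]).
    by apply: subset_leq_card; apply/subsetP => x; rewrite !inE -orbA.
  have dQ : is_downset [set: Q] by apply/downsetP => x y; rewrite !inE.
  have [Z Zn [TZ _]] := extend_downset HQ dT dQ (subsetT T) cT.
  have [Z' Z'n /iso_subP [g [gi gim gl]]] := W1 _ Zn.
  have dZ' := dn_down Z'n.
  have inZ t : t \in T -> t \in Z by move=> tT; apply: (subsetP TZ).
  have mm : forall t, t \in T -> (forall y, le y t -> y = t) -> g t = botl \/ g t = botr.
    move=> t tT mt; apply: (min_bots dZ').
    - by rewrite -gim imset_f // inZ.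
    - move=> w; rewrite -gim => /imsetP[u uZ ->] h.
      have tZ := inZ t tT; rewrite -gl // in h.
      by rewrite (mt u h).
  have tA : a1 \in T by rewrite !inE eqxx.
  have tB : b1 \in T by rewrite !inE eqxx ?orbT.
  have tC : a2 \in T by rewrite !inE eqxx ?orbT.
  have gA := mm a1 tA ma1; have gB := mm b1 tB mb1; have gC := mm a2 tC ma2.
  have inj x y : x \in T -> y \in T -> g x = g y -> x = y.
    by move=> xT yT; apply: gi; apply: inZ.
  case: gA => hA; case: gB => hB; case: gC => hC.
  + by move/negP: a1b1; apply; apply/eqP; apply: inj => //; rewrite hA hB.
  + by move/negP: a1b1; apply; apply/eqP; apply: inj => //; rewrite hA hB.
  + by move/negP: a1a2; apply; apply/eqP; apply: inj => //; rewrite hA hC.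
  + by move/negP: a2b1; apply; apply/eqP; apply: inj => //; rewrite hB hC.
  + by move/negP: a2b1; apply; apply/eqP; apply: inj => //; rewrite hB hC.
  + by move/negP: a1a2; apply; apply/eqP; apply: inj => //; rewrite hA hC.
  + by move/negP: a1b1; apply; apply/eqP; apply: inj => //; rewrite hA hB.
  + by move/negP: a1b1; apply; apply/eqP; apply: inj => //; rewrite hA hB.
have KL0 : K :&: L = set0.
  apply/setP => x; rewrite !inE; apply/negbTE/negP => /andP[xK xL].
  by move: (b1K x xK); rewrite -a2b1 a2L.
have : #|K :|: L| <= #|Q| by apply: max_card.
rewrite cardsU KL0 cards0 subn0 cK cL.
suff -> : #|PR| = m + i + (m + i) by [].
by rewrite /= !card_sum !card_ord HRm.
Qed.

End PR6.

Section PR5.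
Variables (P0 R0 : fposet) (i : nat).
Local Notation PR := (disj_union (above_chain P0 i) (above_chain R0 i)).
Local Notation m := #|P0|.
Local Notation n := (m + i + 1).
Hypothesis HP : is_poset P0.
Hypothesis HR : is_poset R0.
Hypothesis HRm : #|R0| = m.
Hypothesis Hmi : m < i.
Variables (p0 : P0) (r0 : R0).
Local Notation TPs := (@TP P0 R0 i).
Local Notation TRs := (@TR P0 R0 i).
Local Notation Us := (@U P0 R0 i).

Definition AU : {set 'I_i.+1} := [set a : 'I_i.+1 | m < a].

Lemma dn_split : downsets_n PR n =
  TPs @: downsets P0 :|: TRs @: downsets R0 :|: (fun a : 'I_i.+1 => Us a) @: AU.
Proof.
apply/setP => S; apply/idP/idP => [hS|].
- case: (classify HRm Hmi hS) => [[D hD ->]|[E hE ->]|[a ha ->]].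
  + by rewrite !inE imset_f.
  + by rewrite !inE imset_f ?orbT.
  + have ai : a < i.+1 by case/andP: ha.
    apply/setUP; right; apply/imsetP; exists (Ordinal ai) => //.
    by rewrite inE /=; case/andP: ha.
- case/setUP => [/setUP[]|] /imsetP[X hX ->].
  + exact: TP_down.
  + exact: TR_down.
  + by apply: U_down => //; move: hX; rewrite inE => ->; rewrite -ltnS ltn_ord.
Qed.

Lemma card_IU : #|[set iso_class (Us a) | a : 'I_i.+1 in AU]| = (i - m).+1./2.
Proof.
have hA a : a \in AU -> m < a <= i by rewrite inE => ->; rewrite -ltnS ltn_ord.
rewrite (@card_imset_equiv _ _ _ _ _ (fun a : 'I_i.+1 => (inord (maxn a (n - a)) : 'I_i.+1))).
  have -> : [set (inord (maxn a (n - a)) : 'I_i.+1) | a : 'I_i.+1 in AU] = ~: [set b : 'I_i.+1 | b.*2 < n].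
    apply/setP => b; rewrite !inE; apply/imsetP/idP => [[a /hA ha ->]|hb].
      rewrite inordK; first by lia.
      by rewrite ltnS; lia.
    have bi : b <= i by rewrite -ltnS ltn_ord.
    exists b; first by rewrite inE; lia.
    apply: ord_inj; rewrite inordK; first by lia.
    by rewrite ltnS; lia.
  have := cardsC [set b : 'I_i.+1 | b.*2 < n]; rewrite card_ord.
  have -> : [set b : 'I_i.+1 | b.*2 < n] = [set b : 'I_i.+1 | b < (n.+1)./2].
    by apply/setP => b; rewrite !inE; apply/idP/idP; lia.
  rewrite card_pref; last by lia.
  lia.
move=> a a' /hA ha /hA ha'.
rewrite (@iso_class_eq PR (inl (inl p0))) isoUU //.
rewrite -(inj_eq (@ord_inj i.+1)) !inordK // ltnS; lia.
Qed.

Lemma numDn_PR : numDn PR n = Cconst P0 R0 + (i - m).+1./2.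
Proof.
rewrite /numDn dn_split !imsetU -!imset_comp.
set IP := [set _ | _ in downsets P0]; set IR := [set _ | _ in downsets R0];
  set IU := [set _ | _ in AU].
have x0 : PR := inl (inl p0).
have cIU : #|IU| = (i - m).+1./2 by rewrite -card_IU.
have cIP : #|IP| = numD P0.
  rewrite /IP /numD; apply: (@card_classes P0 PR p0 (inl (inl p0))) => D D' hD hD'.
  exact: isoLL.
have cIR : #|IR| = numD R0.
  rewrite /IR /numD; apply: (@card_classes R0 PR r0 (inl (inl p0))) => D D' hD hD'.
  exact: isoRR.
set DI := [set S in downsets P0 | [exists S' in downsets R0, iso_sub S S']].
have cI : #|IP :&: IR| = numD_inter P0 R0.
  have -> : IP :&: IR = [set iso_class (TPs D) | D in DI].
    apply/setP => c; rewrite inE; apply/andP/imsetP.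
    - case=> /imsetP[D hD ->] /imsetP[E hE /eqP].
      rewrite /= (@iso_class_eq PR (inl (inl p0))) isoLR // => h.
      exists D => //; rewrite inE hD /=; apply/existsP; exists E; by rewrite hE.
    - case=> D; rewrite inE => /andP[hD /exists_inP[E hE h]] ->; split.
        by apply: imset_f.
      apply/imsetP; exists E => //=; apply/eqP.
      by rewrite (@iso_class_eq PR (inl (inl p0))) isoLR.
  rewrite /numD_inter; apply: (@card_classes P0 PR p0 (inl (inl p0))) => D D'.
  rewrite /DI inE => /andP[hD _]; rewrite inE => /andP[hD' _]; exact: isoLL.
have disj : (IP :|: IR) :&: IU = set0.
  apply/setP => c; rewrite !inE; apply/negbTE/negP => /andP[/orP[] /imsetP[D hD ->]];
    case/imsetP => a /[dup] ha; rewrite inE => ma /eqP /=;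
    rewrite (@iso_class_eq PR (inl (inl p0))).
  + by apply/negP; apply: notTU => //; rewrite ma -ltnS ltn_ord.
  + by apply/negP; apply: notTRU => //; rewrite ma -ltnS ltn_ord.
rewrite cardsU disj cards0 subn0 cardsU cIP cIR cI cIU /Cconst.
done.
Qed.

End PR5.

Lemma empty_iso (P0 R0 : fposet) : is_poset P0 -> #|P0| = 0 -> #|R0| = 0 -> iso_poset P0 R0.
Proof.
move=> HP h0 h1.
have F (x : P0) : False by move: (card0_eq h0 x); rewrite !inE.
have G (y : R0) : False by move: (card0_eq h1 y); rewrite !inE.
apply: (iso_intro (f := fun x : P0 => match F x with end)) => //.
- by apply/setP => y; case: (G y).
Qed.

Unset Implicit Arguments. Set Strict Implicit. Set Printing Implicit Defensive.
Import GRing.Theory Num.Theory.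

Theorem mainTheorem6 (P0 R0 : fposet) (m i : nat) :
  is_poset P0 -> is_poset R0 ->
  psize P0 = m -> psize R0 = m ->
  ~~ iso_poset P0 R0 ->
  (m < i)%N ->
  let PR := disj_union (above_chain P0 i) (above_chain R0 i) in
  let n := (m + i + 1)%N in
  let k := (Cconst P0 R0 + ceil_half (i - m))%N in
  [/\ covtree_node n PR /\ witness n PR PR,
      numDn PR n = k,
      psize PR = (2 * m + 2 * i)%N,
      (forall Q : fposet, witness n PR Q -> (psize PR <= psize Q)%N)
    & forall c : int,
        ((i%:Z - (ceil_half (i - m))%:Z) > 1 + (Cconst P0 R0)%:Z - m%:Z + c)%R ->
        ((psize PR)%:Z > n%:Z + k%:Z + c)%R].
Proof.
move=> HP HR hP hR Hni Hmi PR n k.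
rewrite /psize in hP hR; subst m.
have m1 : (0 < #|P0|)%N.
  rewrite lt0n; apply/negP => /eqP h0; move/negP: Hni; apply.
  by apply: empty_iso => //; rewrite hR.
have [p0 _] : exists p : P0, p \in P0 by apply/card_gt0P.
have [r0 _] : exists r : R0, r \in R0 by apply/card_gt0P; rewrite hR.
have cPR : psize PR = (2 * #|P0| + 2 * i)%N.
  rewrite /psize /PR !card_sum !card_ord hR; lia.
have HPR : is_poset PR by apply: PR_poset.
split.
- have w : witness n PR PR.
    split => //; split => S hS; exists S => //; exact: iso_refl.
  by split => //; exists PR.
- by rewrite /k /ceil_half /n /PR (numDn_PR HP HR hR Hmi p0 r0).
- exact: cPR.
- move=> Q HW; rewrite /psize; exact: (minimality HP hR Hmi p0 r0 Hni HW).
- move=> c; rewrite cPR /n /k.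
  set C := Cconst P0 R0; set ch := ceil_half _.
  lia.
Qed.
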